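(* Let $v\equiv 1$ or $7\pmod{24}$ with $v\ge 7$, and let $n=\frac{v-1}{6}$. For all integers $i,j$ with $0\le j\le n$ and $j\le i\le n$, there exists a cyclic four-fold triple system CTS$(v,4)$ whose fine structure $(c_1,c_2,c_3,c_4)$ satisfies $(c_2,c_3,c_4)=(2n-2i,\,i-j,\,j)$.
   Context: A cyclic $\lambda$-fold triple system CTS$(v,\lambda)$ is a multiset $\mathcal B$ of 3-element subsets (blocks) of $\mathbb Z_v$ such that every 2-element subset of $\mathbb Z_v$ is contained in exactly $\lambda$ blocks (counted with multiplicity), and $\mathcal B$ is invariant under the translation $x\mapsto x+1$. Thus $\mathcal B$ is a union of translation orbits of 3-subsets with multiplicities; a base block is an orbit representative. The fine structure is $(c_1,\ldots,c_\lambda)$, where $c_i$ is the number of distinct base blocks (orbits) occurring with multiplicity exactly $i$; for $\lambda=4$, $c_1=4n-4c_4-3c_3-2c_2$. *)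

(* Defs.v *)
From mathcomp Require Import all_boot all_order all_algebra.
Set Implicit Arguments. Unset Strict Implicit. Unset Printing Implicit Defensive.
Import GRing.Theory.
Local Open Scope ring_scope.

(* A multiset of subsets of Z_v is represented by its multiplicity function
   m : {set 'Z_v} -> nat.  (Only used for v >= 2, where 'Z_v is Z/vZ.) *)

Definition translate (v : nat) (k : 'Z_v) (B : {set 'Z_v}) : {set 'Z_v} :=
  [set x + k | x in B].

Definition orbitZ (v : nat) (B : {set 'Z_v}) : {set {set 'Z_v}} :=
  [set translate k B | k : 'Z_v].

Definition isCTS (v lam : nat) (m : {set 'Z_v} -> nat) : Prop :=
  [/\ (forall B : {set 'Z_v}, (0 < m B)%N -> #|B| = 3%N),
      (forall B : {set 'Z_v}, m (translate 1 B) = m B) &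
      (forall x y : 'Z_v, x != y ->
         (\sum_(B : {set 'Z_v} | (x \in B) && (y \in B)) m B)%N = lam)].

Definition fine_c (v : nat) (m : {set 'Z_v} -> nat) (i : nat) : nat :=
  #|[set orbitZ B | B in [set B : {set 'Z_v} | m B == i]]|.

(* Main.v *)
Require Import Defs.
From mathcomp Require Import all_boot all_order all_algebra.
From mathcomp Require Import zify.
Set Implicit Arguments. Unset Strict Implicit. Unset Printing Implicit Defensive.
Import GRing.Theory.
Definition Lof (T : seq (nat * nat)) := flatten [seq [:: x.1; x.2; x.1 + x.2] | x <- T].
Definition Tof n (P : seq (nat * nat)) := [seq (x.2 - x.1, n + x.1) | x <- P].

Lemma size_Lof T : size (Lof T) = 3 * size T.
Proof. elim: T => //= x T IH; rewrite IH; lia. Qed.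

Lemma cover n P d x : x \in P -> x.1 <= x.2 ->
  (d = x.2 - x.1 \/ d = n + x.1 \/ d = n + x.2) -> d \in Lof (Tof n P).
Proof.
move=> xP h H; apply/flatten_mapP; exists (x.2 - x.1, n + x.1); first by apply: map_f.
rewrite /= !inE.
case: H => [hd|[hd|hd]]; apply/orP;
  [left | right; apply/orP; left | right; apply/orP; right]; apply/eqP; lia.
Qed.

Lemma good n P : size P = n ->
  (forall d, 1 <= d <= 3 * n -> d \in Lof (Tof n P)) ->
  perm_eq (Lof (Tof n P)) (iota 1 (3 * n)).
Proof.
move=> sP H.
have sL : size (Lof (Tof n P)) = 3 * n by rewrite size_Lof size_map sP.
have sub : {subset iota 1 (3 * n) <= Lof (Tof n P)}.
  by move=> d; rewrite mem_iota => hd; apply: H; lia.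
have sz : size (Lof (Tof n P)) <= size (iota 1 (3 * n)) by rewrite sL size_iota.
have [e1 e2] := uniq_min_size (iota_uniq 1 (3 * n)) sub sz.
apply: uniq_perm; last by move=> d; rewrite e2.
  by rewrite (uniq_size_uniq (iota_uniq 1 (3 * n)) e2) sL size_iota.
exact: iota_uniq.
Qed.

Definition fam0 s : seq (nat * nat) :=
  [seq (4 * s + r - 1, 8 * s - r + 1) | r <- iota 1 (2 * s)] ++
  ([seq (r, 4 * s - r - 1) | r <- iota 1 (s - 1)] ++
  ([seq (s + r + 1, 3 * s - r) | r <- iota 1 (s - 2)] ++
  [:: (s, s + 1); (2 * s + 1, 6 * s); (2 * s, 4 * s - 1)])).

Definition fam1 s : seq (nat * nat) :=
  [seq (4 * s + r + 1, 8 * s - r + 3) | r <- iota 1 (2 * s)] ++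
  ([seq (r, 4 * s + 1 - r) | r <- iota 1 s] ++
  ([seq (s + 2 + r, 3 * s + 1 - r) | r <- iota 1 (s - 2)] ++
  [:: (2 * s + 1, 6 * s + 2); (s + 1, s + 2); (2 * s + 2, 4 * s + 1)])).

Ltac fin := simpl; lia.

Lemma cover0 s d : 2 <= s -> 1 <= d <= 3 * (4 * s) -> d \in Lof (Tof (4 * s) (fam0 s)).
Proof.
move=> s2 hd.
Ltac p1 r := apply: (cover (x := (4 * _ + r - 1, 8 * _ - r + 1))); [rewrite mem_cat; apply/orP; left; apply/mapP; exists r; [rewrite mem_iota; lia|done] | fin | fin].
Ltac p2 r := apply: (cover (x := (r, 4 * _ - r - 1))); [rewrite !mem_cat; apply/orP; right; apply/orP; left; apply/mapP; exists r; [rewrite mem_iota; lia|done] | fin | fin].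
Ltac p3 r := apply: (cover (x := (_ + r + 1, 3 * _ - r))); [rewrite !mem_cat; apply/orP; right; apply/orP; right; apply/orP; left; apply/mapP; exists r; [rewrite mem_iota; lia|done] | fin | fin].
Ltac p4 a b := apply: (cover (x := (a, b))); [rewrite !mem_cat !inE eqxx ?orbT //| fin | fin].
have [hl|hl] := leqP d (4 * s).
  have [m [hm|hm]] : exists m, d = 2 * m \/ d = 2 * m + 1 by exists (d %/ 2); lia.
    p1 (2 * s + 1 - m).
  have [h0|h0] := leqP m 0; first by p4 s (s + 1).
  have [h1|h1] := leqP m (s - 2); first by p3 (s - 1 - m).
  have [h2|h2] := leqP m (s - 1); first by p4 (2 * s) (4 * s - 1).
  have [h3|h3] := leqP m (2 * s - 2); first by p2 (2 * s - 1 - m).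
  by p4 (2 * s + 1) (6 * s).
set q := d - 4 * s.
have [h|h] := leqP q (s - 1); first by p2 q.
have [h'|h'] := leqP q s; first by p4 s (s + 1).
have [h''|h''] := leqP q (s + 1); first by p4 s (s + 1).
clear h'.
have [h'|h'] := leqP q (2 * s - 1); first by p3 (q - s - 1).
have [h2|h2] := leqP q (2 * s); first by p4 (2 * s) (4 * s - 1).
have [h3|h3] := leqP q (2 * s + 1); first by p4 (2 * s + 1) (6 * s).
have [h4|h4] := leqP q (3 * s - 1); first by p3 (3 * s - q).
have [h5|h5] := leqP q (4 * s - 2); first by p2 (4 * s - 1 - q).
have [h6|h6] := leqP q (4 * s - 1); first by p4 (2 * s) (4 * s - 1).
have [h7|h7] := leqP q (6 * s - 1); first by p1 (q - 4 * s + 1).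
have [h8|h8] := leqP q (6 * s); first by p4 (2 * s + 1) (6 * s).
by p1 (8 * s + 1 - q).
Qed.

Lemma cover1 s d : 2 <= s -> 1 <= d <= 3 * (4 * s + 1) ->
  d \in Lof (Tof (4 * s + 1) (fam1 s)).
Proof.
move=> s2 hd.
Ltac q1 r := apply: (cover (x := (4 * _ + r + 1, 8 * _ - r + 3))); [rewrite mem_cat; apply/orP; left; apply/mapP; exists r; [rewrite mem_iota; lia|done] | fin | fin].
Ltac q2 r := apply: (cover (x := (r, 4 * _ + 1 - r))); [rewrite !mem_cat; apply/orP; right; apply/orP; left; apply/mapP; exists r; [rewrite mem_iota; lia|done] | fin | fin].
Ltac q3 r := apply: (cover (x := (_ + 2 + r, 3 * _ + 1 - r))); [rewrite !mem_cat; apply/orP; right; apply/orP; right; apply/orP; left; apply/mapP; exists r; [rewrite mem_iota; lia|done] | fin | fin].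
have [hl|hl] := leqP d (4 * s + 1).
  have [m [hm|hm]] : exists m, d = 2 * m \/ d = 2 * m + 1 by exists (d %/ 2); lia.
    q1 (2 * s + 1 - m).
  have [h0|h0] := leqP m 0; first by p4 (s + 1) (s + 2).
  have [h1|h1] := leqP m (s - 2); first by q3 (s - 1 - m).
  have [h2|h2] := leqP m (s - 1); first by p4 (2 * s + 2) (4 * s + 1).
  have [h3|h3] := leqP m (2 * s - 1); first by q2 (2 * s - m).
  by p4 (2 * s + 1) (6 * s + 2).
set q := d - (4 * s + 1).
have [h|h] := leqP q s; first by q2 q.
have [h'|h'] := leqP q (s + 2); first by p4 (s + 1) (s + 2).
have [h1|h1] := leqP q (2 * s); first by q3 (q - s - 2).
have [h2|h2] := leqP q (2 * s + 1); first by p4 (2 * s + 1) (6 * s + 2).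
have [h3|h3] := leqP q (2 * s + 2); first by p4 (2 * s + 2) (4 * s + 1).
have [h4|h4] := leqP q (3 * s); first by q3 (3 * s + 1 - q).
have [h5|h5] := leqP q (4 * s); first by q2 (4 * s + 1 - q).
have [h6|h6] := leqP q (4 * s + 1); first by p4 (2 * s + 2) (4 * s + 1).
have [h7|h7] := leqP q (6 * s + 1); first by q1 (q - 4 * s - 1).
have [h8|h8] := leqP q (6 * s + 2); first by p4 (2 * s + 1) (6 * s + 2).
by q1 (8 * s + 3 - q).
Qed.

Lemma skolem n : 0 < n -> (n %% 4 = 0 \/ n %% 4 = 1) ->
  exists T : seq (nat * nat), size T = n /\ perm_eq (Lof T) (iota 1 (3 * n)).
Proof.
move=> n0 hn.
case: (n =P 1) => [->|n1]; first by exists [:: (1, 2)].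
case: (n =P 4) => [->|n4]; first by exists (Tof 4 [:: (1,2);(4,6);(5,8);(3,7)]).
case: (n =P 5) => [->|n5].
  by exists (Tof 5 [:: (1,6);(2,4);(3,7);(5,8);(9,10)]).
have H : (exists s, n = 4 * s /\ 2 <= s) \/ (exists s, n = 4 * s + 1 /\ 2 <= s).
  case: hn => hn; [left | right]; exists (n %/ 4); lia.
case: H => [[s [ns s2]]|[s [ns s2]]]; subst n.
- exists (Tof (4 * s) (fam0 s)); split.
    rewrite size_map /fam0 !size_cat !size_map !size_iota /=; lia.
  apply: good; first by rewrite /fam0 !size_cat !size_map !size_iota /=; lia.
  by move=> d hd; apply: cover0.
- exists (Tof (4 * s + 1) (fam1 s)); split.
    rewrite size_map /fam1 !size_cat !size_map !size_iota /=; lia.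
  apply: good; first by rewrite /fam1 !size_cat !size_map !size_iota /=; lia.
  by move=> d hd; apply: cover1.
Qed.

Local Open Scope ring_scope.

Section Trans.
Variable p : nat.
Local Notation Z := 'Z_p.
Local Notation translate := (@translate p).
Local Notation orbitZ := (@orbitZ p).

Lemma mem_translate (t x : Z) (B : {set Z}) : (x \in translate t B) = (x - t \in B).
Proof.
apply/imsetP/idP => [[y yB ->]|xB]; first by rewrite addrK.
by exists (x - t) => //; rewrite subrK.
Qed.

Lemma translate_comp (a b : Z) B : translate a (translate b B) = translate (b + a) B.
Proof. by apply/setP=> x; rewrite !mem_translate opprD addrA addrAC. Qed.

Lemma translate0 B : translate 0 B = B.
Proof. by apply/setP=> x; rewrite mem_translate subr0. Qed.

Lemma translateK t : cancel (translate t) (translate (-t)).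
Proof. by move=> B; rewrite translate_comp subrr translate0. Qed.

Lemma translate_inj t : injective (translate t).
Proof. exact: can_inj (translateK t). Qed.

Lemma card_translate t B : #|translate t B| = #|B|.
Proof. by rewrite /translate card_imset //; apply: addIr. Qed.

Lemma orbitZ_translate t B : orbitZ (translate t B) = orbitZ B.
Proof.
apply/setP=> S; apply/imsetP/imsetP => [[k _ ->]|[k _ ->]].
  by exists (t + k) => //; rewrite translate_comp.
by exists (k - t) => //; rewrite translate_comp addrC subrK.
Qed.

Lemma mem_orbitZ B : B \in orbitZ B.
Proof. by apply/imsetP; exists 0 => //; rewrite translate0. Qed.

Definition pc (E : {set Z}) (x y : Z) : nat :=
  (\sum_(t : Z) ((x \in translate t E) && (y \in translate t E)))%N.

Lemma pc_uniq E x y t1 t2 : (pc E x y <= 1)%N ->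
  x \in translate t1 E -> y \in translate t1 E ->
  x \in translate t2 E -> y \in translate t2 E -> t1 = t2.
Proof.
move=> H x1 y1 x2 y2; apply/eqP; apply: contraTT H => ne.
rewrite -ltnNge /pc (bigD1 t1) //= x1 y1 (bigD1 t2) //=; last by rewrite eq_sym.
by rewrite x2 y2.
Qed.

Lemma pc_ge1 E x y t : x \in translate t E -> y \in translate t E -> (1 <= pc E x y)%N.
Proof. by move=> x1 y1; rewrite /pc (bigD1 t) //= x1 y1. Qed.

Lemma mem_sum (A : {set Z}) z : ((z \in A) : nat) = (\sum_(r in A) (z == r))%N.
Proof.
case: (boolP (z \in A)) => zA.
  rewrite (bigD1 z) //= eqxx big1 // => r /andP[_]; by rewrite eq_sym => /negbTE ->.
by rewrite big1 // => r rA; case: eqP rA zA => // -> ->.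
Qed.

Lemma addr_eqE (d q r : Z) : (d + q == r) = (d == r - q).
Proof. by apply/eqP/eqP => [<-|->]; [rewrite addrK | rewrite subrK]. Qed.

Lemma pcE (a b x y : Z) : 0 != a -> 0 != b -> a != b -> x != y ->
  pc (0 |: (a |: [set b])) x y =
  (((y - x == a)%R : nat) + (y - x == b)%R + (y - x == b - a)%R + (y - x == - a)%R
   + (y - x == - b)%R + (y - x == a - b)%R)%N.
Proof.
move=> a0 b0 ab xy.
set E := 0 |: _.
have nd : y - x != 0 by rewrite subr_eq0 eq_sym.
set d := y - x.
rewrite /pc (reindex_inj (inv_inj (subKr x))) /=.
have -> : (\sum_(q : Z) ((x \in translate (x - q)%R E) && (y \in translate (x - q)%R E)))%N
   = (\sum_(q in E) (((d + q)%R \in E) : nat))%N.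
  rewrite [RHS]big_mkcond; apply: eq_bigr => q _ /=.
  rewrite !mem_translate opprB [x + _]addrC subrK addrA addrAC.
  by case: (q \in E).
have n0 : 0 \notin a |: [set b] by rewrite !inE negb_or a0 b0.
have n1 : a \notin [set b] by rewrite !inE.
rewrite big_setU1 // big_setU1 // big_set1.
rewrite !mem_sum /E big_setU1 // big_setU1 // big_set1.
rewrite big_setU1 // big_setU1 // big_set1.
rewrite big_setU1 // big_setU1 // big_set1.
rewrite !(addr_eqE d) !subrr !subr0 !sub0r (negbTE nd).
by case: (d == a); case: (d == b); case: (d == b - a); case: (d == -a);
  case: (d == -b); case: (d == a - b).
Qed.

End Trans.

Section Core.
Variables (n : nat) (T : seq (nat * nat)).
Hypothesis Hn : (0 < n)%N.
Hypothesis HT : size T = n.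
Hypothesis HL : perm_eq (flatten [seq [:: x.1; x.2; (x.1 + x.2)%N] | x <- T]) (iota 1 (3 * n)).
Local Notation p := (6 * n).+1.
Local Notation Z := 'Z_p.
Local Notation translate := (@translate p).
Local Notation orbitZ := (@orbitZ p).

Lemma p_gt1 : (1 < p)%N. Proof. lia. Qed.

Lemma valZ (x : Z) : (x < p)%N.
Proof. by apply: leq_trans (ltn_ord x) _; rewrite Zp_cast // p_gt1. Qed.

Lemma natZ_eq x y : (x < p)%N -> (y < p)%N -> ((x%:R : Z) == y%:R) = (x == y).
Proof.
move=> xp yp; rewrite -(inj_eq val_inj) /= !val_Zp_nat ?p_gt1 //.
by rewrite !modn_small.
Qed.

Lemma natZ_eq0 x : (0 < x < p)%N -> ((x%:R : Z) == 0) = false.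
Proof.
move=> /andP[x0 xp]; rewrite -[X in _ == X]/(0%:R : Z) natZ_eq //; apply/negbTE; lia.
Qed.

Lemma natZ_eqN x y : (0 < x)%N -> (x + y < p)%N -> ((x%:R : Z) == - y%:R) = false.
Proof.
move=> x0 xyp; rewrite -addr_eq0 -natrD natZ_eq0 //; lia.
Qed.

Lemma memT x : x \in T -> [/\ (1 <= x.1)%N, (1 <= x.2)%N & (x.1 + x.2 <= 3 * n)%N].
Proof.
move=> xT.
have H e : e \in [:: x.1; x.2; (x.1 + x.2)%N] -> (1 <= e <= 3 * n)%N.
  move=> he; have : e \in iota 1 (3 * n).
    by rewrite -(perm_mem HL); apply/flatten_mapP; exists x.
  rewrite mem_iota; lia.
have := H x.1; have := H x.2; have := H (x.1 + x.2)%N.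
rewrite !inE !eqxx !orbT => /(_ isT) h3 /(_ isT) h2 /(_ isT) h1; split; lia.
Qed.

Definition uu (k : 'I_n) := (nth (0,0)%N T k).1.
Definition yy (k : 'I_n) := (nth (0,0)%N T k).2.
Definition ww (k : 'I_n) := (uu k + yy k)%N.

Lemma blk k : [/\ (1 <= uu k)%N, (1 <= yy k)%N & (ww k <= 3 * n)%N].
Proof. apply: memT; apply: mem_nth; rewrite HT; exact: ltn_ord. Qed.

Definition fe (d : Z) (e : nat) : nat := ((d == e%:R) : nat) + (d == - e%:R).
Definition S (k : 'I_n) (d : Z) : nat := (fe d (uu k) + fe d (yy k) + fe d (ww k))%N.

Lemma iota_sum d : d != 0 -> (\sum_(e <- iota 1 (3 * n)) fe d e = 1)%N.
Proof.
move=> d0.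
set m := nat_of_ord d.
have dm : d = m%:R by rewrite natr_Zp.
have mp : (m < p)%N by apply: valZ.
have m0 : (0 < m)%N.
  rewrite lt0n; apply: contra d0 => /eqP m0; by rewrite dm m0.
have -> : (\sum_(e <- iota 1 (3 * n)) fe d e =
    \sum_(e <- iota 1 (3 * n)) ((e == m) + (e == p - m)))%N.
  rewrite !big_seq; apply: eq_bigr => e; rewrite mem_iota => he.
  rewrite /fe dm natZ_eq //; last by lia.
  rewrite eq_sym; congr (_ + _)%N.
  rewrite -addr_eq0 -natrD; have ep : (m + e < 2 * p)%N by lia.
  rewrite -(inj_eq val_inj) /= val_Zp_nat ?p_gt1 //.
  have [hl|hl] := ltnP (m + e) p.
    rewrite modn_small //; by case: (m + e =P 0)%N => h1; case: (e =P (p - m))%N => h2 //; exfalso; lia.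
  have -> : (m + e = p + (m + e - p))%N by lia.
  rewrite modnDl modn_small; last lia.
  by case: (m + e - p =P 0)%N => h1; case: (e =P (p - m))%N => h2 //; exfalso; lia.
rewrite big_split /=.
have cnt c : (\sum_(e <- iota 1 (3 * n)) (e == c) = (c \in iota 1 (3 * n)))%N.
  rewrite -(count_uniq_mem _ (iota_uniq _ _)) -sum1_count [RHS]big_mkcond /=.
  by apply: eq_bigr => e _; case: (e == c).
rewrite !cnt !mem_iota.
have [hl|hl] := leqP m (3 * n).
  have -> : (1 <= m < 1 + 3 * n)%N by lia.
  have -> : (1 <= p - m < 1 + 3 * n)%N = false by apply/negbTE; lia.
  done.
have -> : (1 <= m < 1 + 3 * n)%N = false by apply/negbTE; lia.
have -> : (1 <= p - m < 1 + 3 * n)%N by lia.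
done.
Qed.

Lemma part d : d != 0 -> (\sum_(k < n) S k d = 1)%N.
Proof.
move=> d0; rewrite -(iota_sum d0) -(perm_big _ HL) big_flatten /= big_map.
rewrite (big_nth (0,0)%N) HT big_mkord; apply: eq_bigr => k _.
by rewrite !big_cons big_nil /S /ww addn0 !addnA.
Qed.


Definition E (kk : 'I_n * bool) : {set Z} :=
  let a : Z := (uu kk.1)%:R in let b : Z := (ww kk.1)%:R in
  if kk.2 then 0 |: (-a |: [set -b]) else 0 |: (a |: [set b]).

Lemma blkZ k : [/\ 0 != ((uu k)%:R : Z), 0 != ((ww k)%:R : Z) & ((uu k)%:R : Z) != (ww k)%:R].
Proof.
have [h1 h2 h3] := blk k; rewrite /ww in h3.
split.
- by rewrite eq_sym natZ_eq0 //; lia.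
- by rewrite eq_sym natZ_eq0 // /ww; lia.
- rewrite natZ_eq /ww; [apply/negP => /eqP h; lia | lia | lia].
Qed.

Lemma pc_blk kk x y : x != y -> pc (E kk) x y = S kk.1 (y - x).
Proof.
case: kk => k b /= xy.
have [a0 b0 ab] := blkZ k.
have e1 : ((ww k)%:R : Z) - (uu k)%:R = (yy k)%:R by rewrite /ww natrD addrC addKr.
have e2 : ((uu k)%:R : Z) - (ww k)%:R = - (yy k)%:R by rewrite -opprB e1.
rewrite /S /fe /E /=.
move: e1 e2 a0 b0 ab.
set u : Z := (uu k)%:R; set w : Z := (ww k)%:R; set y' : Z := (yy k)%:R.
move=> e1 e2 a0 b0 ab.
case: b.
- rewrite pcE //; first last.
  + by rewrite eqr_opp.
  + by rewrite eq_sym oppr_eq0 eq_sym.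
  + by rewrite eq_sym oppr_eq0 eq_sym.
  rewrite !opprK (addrC (- w)) (addrC (- u)) e1 e2.
  set d := y - x.
  by case: (d == u); case: (d == w); case: (d == y'); case: (d == -u);
    case: (d == -w); case: (d == -y').
- rewrite pcE // e1 e2.
  set d := y - x.
  by case: (d == u); case: (d == w); case: (d == y'); case: (d == -u);
    case: (d == -w); case: (d == -y').
Qed.

Lemma S_le1 k d : d != 0 -> (S k d <= 1)%N.
Proof. by move=> d0; rewrite -(part d0) (bigD1 k) //= leq_addr. Qed.

Lemma S_uniq k k' d : d != 0 -> (1 <= S k d)%N -> (1 <= S k' d)%N -> k = k'.
Proof.
move=> d0 h1 h2; apply/eqP/negPn/negP => kk; have := part d0.
rewrite (bigD1 k) // (bigD1 k') /=; [lia | by rewrite eq_sym].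
Qed.

Lemma Euniq kk kk' t s : translate t (E kk) = translate s (E kk') -> kk = kk' /\ t = s.
Proof.
case: kk kk' => k b [k' b'] Heq.
have [u0 w0 uw] := blkZ k.
set a0 : Z := if b then - (uu k)%:R else (uu k)%:R.
have a00 : a0 != 0 by rewrite /a0; case: (b); rewrite ?oppr_eq0 eq_sym.
have a0E : a0 \in E (k, b) by rewrite /a0 /E; case: (b) => /=; rewrite !inE eqxx !orbT.
have zE b2 k2 : 0 \in E (k2, b2) by rewrite /E; case: b2 => /=; rewrite !inE eqxx.
have hx : t \in translate t (E (k, b)) by rewrite mem_translate subrr.
have hy : a0 + t \in translate t (E (k, b)) by rewrite mem_translate addrK.
have hx' := hx; have hy' := hy; rewrite Heq in hx' hy'.
have xy : t != a0 + t by rewrite eq_sym -subr_eq0 addrK.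
have S1 : (1 <= S k a0)%N by have := pc_ge1 hx hy; rewrite pc_blk //= addrK.
have S2 : (1 <= S k' a0)%N by have := pc_ge1 hx' hy'; rewrite pc_blk //= addrK.
have kk := S_uniq a00 S1 S2; subst k'.
case: (b =P b') => [eb|nb]; first subst b'.
  split => //; apply: (@pc_uniq _ (E (k,b)) t (a0 + t) t s _ hx hy hx' hy').
  by rewrite pc_blk // addrK; apply: S_le1.
exfalso.
have key z : z \in E (k, b) -> - z \in E (k, b') -> z != 0 -> s = z + t.
  move=> zE1 zE2 z0.
  have hz : z + t \in translate t (E (k, b)) by rewrite mem_translate addrK.
  have hz' := hz; rewrite Heq in hz'.
  have xz : t != z + t by rewrite eq_sym -subr_eq0 addrK.
  apply: (pc_uniq (x := t) (y := z + t) (E := E (k, b'))) => //.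
  - by rewrite pc_blk // addrK; apply: S_le1.
  - by rewrite mem_translate opprD addrCA subrr addr0.
  - by rewrite mem_translate subrr.
have eb : b' = ~~ b by move: nb; case: (b); case: (b').
subst b'; move: key uw; clear -u0 w0; case: b => /= key uw.
- have e1 : s = - (uu k)%:R + t.
    by apply: key; rewrite /E /= ?opprK ?inE ?oppr_eq0 ?eqxx ?orbT // eq_sym.
  have e2 : s = - (ww k)%:R + t.
    by apply: key; rewrite /E /= ?opprK ?inE ?oppr_eq0 ?eqxx ?orbT // eq_sym.
  have : - ((uu k)%:R : Z) = - (ww k)%:R by apply: (addIr t); rewrite -e1 -e2.
  by move/oppr_inj => e; rewrite e eqxx in uw.
- have e1 : s = (uu k)%:R + t.
    by apply: key; rewrite /E /= ?opprK ?inE ?eqxx ?orbT // eq_sym.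
  have e2 : s = (ww k)%:R + t.
    by apply: key; rewrite /E /= ?opprK ?inE ?eqxx ?orbT // eq_sym.
  have : ((uu k)%:R : Z) = (ww k)%:R by apply: (addIr t); rewrite -e1 -e2.
  by move=> e; rewrite e eqxx in uw.
Qed.

Lemma zE kk : 0 \in E kk.
Proof. by case: kk => k [] /=; rewrite !inE eqxx. Qed.

Lemma card_E kk : #|E kk| = 3%N.
Proof.
case: kk => k b; have [u0 w0 uw] := blkZ k.
case: b; rewrite /E /=.
  rewrite cardsU1 cardsU1 cards1 !inE negb_or !(eq_sym 0) !oppr_eq0 eqr_opp.
  by rewrite -!(eq_sym 0) u0 w0 uw.
- rewrite cardsU1 cardsU1 cards1 !inE negb_or.
  by rewrite u0 w0 uw.
Qed.

Variables (i j : nat).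
Hypothesis Hji : (j <= i)%N.
Hypothesis Hin : (i <= n)%N.

Definition mult (kk : 'I_n * bool) : nat :=
  if (kk.1 < j)%N then (if kk.2 then 0 else 4)%N
  else if (kk.1 < i)%N then (if kk.2 then 1 else 3)%N else 2%N.

Definition mm (B : {set Z}) : nat :=
  (\sum_(kk : 'I_n * bool) mult kk * \sum_(t : Z) (B == translate t (E kk)))%N.

Lemma mm_translate kk0 t0 : mm (translate t0 (E kk0)) = mult kk0.
Proof.
have inner0 kk t : kk != kk0 -> (translate t0 (E kk0) == translate t (E kk)) = false.
  by move=> h; apply/eqP => /Euniq [e _]; rewrite e eqxx in h.
have inner1 t : t != t0 -> (translate t0 (E kk0) == translate t (E kk0)) = false.
  by move=> h; apply/eqP => /Euniq [_ e]; rewrite e eqxx in h.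
rewrite /mm (bigD1 kk0) //= [X in (_ + X)%N]big1 => [|kk kk0']; last first.
  by rewrite big1 ?muln0 // => t _; rewrite inner0.
rewrite addn0 (bigD1 t0) //= eqxx big1 ?addn0 ?muln1 // => t tt.
by rewrite inner1.
Qed.

Lemma mm_pos B : (0 < mm B)%N -> exists kk t, B = translate t (E kk).
Proof.
move=> H.
case: (pickP (fun kt : ('I_n * bool) * Z => B == translate kt.2 (E kt.1))) => [[kk t] /eqP e|no].
  by exists kk, t.
move: H; rewrite /mm big1 // => kk _; rewrite big1 ?muln0 // => t _.
by have := no (kk, t) => /= ->.
Qed.

Lemma sum_pred_eq (P : pred {set Z}) (S0 : {set Z}) :
  (\sum_(B | P B) (B == S0) = P S0)%N.
Proof.
rewrite big_mkcond (bigD1 S0) //= eqxx big1 ?addn0; first by case: (P S0).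
by move=> B /negbTE ->; case: (P B).
Qed.

Lemma mult_sum k : (mult (k, false) + mult (k, true) = 4)%N.
Proof. by rewrite /mult /=; case: ifP => //; case: ifP. Qed.

Lemma isCTS_mm : isCTS 4 mm.
Proof.
split.
- move=> B /mm_pos [kk [t ->]]; by rewrite card_translate card_E.
- move=> B; apply: eq_bigr => kk _; congr (_ * _)%N.
  have -> : (\sum_(t : Z) (translate 1%R B == translate t (E kk)) =
      \sum_(t : Z) (B == translate (t - 1)%R (E kk)))%N.
    apply: eq_bigr => t _.
    have -> : translate t (E kk) = translate 1 (translate (t - 1) (E kk)) by rewrite translate_comp subrK.
    by rewrite (inj_eq (@translate_inj _ 1)).
  by rewrite [RHS](reindex_inj (addIr (-1))).
- move=> x y xy.
  rewrite /mm exchange_big /=.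
  have -> : (\sum_(kk : 'I_n * bool) \sum_(B : {set Z} | (x \in B) && (y \in B))
       mult kk * \sum_(t : Z) (B == translate t (E kk)) =
     \sum_(kk : 'I_n * bool) mult kk * S kk.1 (y - x)%R)%N.
    apply: eq_bigr => kk _; rewrite -big_distrr /=; congr (_ * _)%N.
    rewrite exchange_big /= -(pc_blk kk xy) /pc; apply: eq_bigr => t _.
    by rewrite sum_pred_eq.
  rewrite -(pair_bigA _ (fun k b => mult (k, b) * S k (y - x)%R))%N /=.
  have d0 : y - x != 0 by rewrite subr_eq0 eq_sym.
  transitivity (4 * \sum_(k < n) S k (y - x)%R)%N; last by rewrite part // muln1.
  rewrite big_distrr /=; apply: eq_bigr => k _.
  by rewrite big_bool /= -mulnDl addnC mult_sum.
Qed.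

Lemma sum_range (a b : nat) : (\sum_(k < n) ((a <= k) && (k < b)) = minn b n - minn a n)%N.
Proof.
elim: n => [|n' IH]; first by rewrite big_ord0; lia.
rewrite big_ord_recr /= IH.
case: (leqP a n') => h1; case: (ltnP n' b) => h2 /=; lia.
Qed.

Lemma fine_mm c : (0 < c)%N -> @fine_c p mm c = #|[set kk | mult kk == c]|.
Proof.
move=> c0; rewrite /fine_c.
have -> : [set orbitZ B | B in [set B | mm B == c]] =
          [set orbitZ (E kk) | kk in [set kk | mult kk == c]].
  apply/setP => O; apply/imsetP/imsetP => [[B] | [kk]].
  - rewrite inE => /eqP hB ->.
    have [kk [t eB]] : exists kk t, B = translate t (E kk) by apply: mm_pos; rewrite hB.
    exists kk; first by rewrite inE -hB eB mm_translate.
    by rewrite eB orbitZ_translate.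
  - rewrite inE => /eqP hk ->; exists (E kk) => //.
    by rewrite inE -{1}(translate0 (E kk)) mm_translate hk.
apply: card_in_imset => kk1 kk2 _ _ eo.
have : E kk1 \in orbitZ (E kk2) by rewrite -eo mem_orbitZ.
case/imsetP => t _ e.
have [] // := @Euniq kk1 kk2 0 t.
by rewrite translate0.
Qed.

Lemma card_mult c : #|[set kk | mult kk == c]| =
  (\sum_(k < n) ((mult (k, true) == c) + (mult (k, false) == c)))%N.
Proof.
rewrite -sum1dep_card big_mkcond /=.
rewrite -(pair_bigA _ (fun k b => if mult (k, b) == c then 1 else 0)%N) /=.
apply: eq_bigr => k _; rewrite big_bool /=.
by case: (_ == c); case: (_ == c).
Qed.

Lemma core_exists : exists m : {set Z} -> nat,
  isCTS 4 m /\ @fine_c p m 2 = (2 * n - 2 * i)%N /\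
  @fine_c p m 3 = (i - j)%N /\ @fine_c p m 4 = j.
Proof.
exists mm; split; first exact: isCTS_mm.
rewrite !fine_mm // !card_mult.
split; [|split].
- transitivity (2 * \sum_(k < n) ((i <= k) && (k < n)))%N.
    rewrite big_distrr /=; apply: eq_bigr => k _; rewrite ltn_ord /mult /=.
    by case: (ltnP k j) => h1; case: (ltnP k i) => h2 /=; lia.
  rewrite sum_range; lia.
- transitivity (\sum_(k < n) ((j <= k) && (k < i)))%N.
    apply: eq_bigr => k _; rewrite /mult /=.
    by case: (ltnP k j) => h1; case: (ltnP k i) => h2 /=; lia.
  rewrite sum_range; lia.
- transitivity (\sum_(k < n) ((0 <= k) && (k < j)))%N.
    apply: eq_bigr => k _; rewrite /mult /=.
    by case: (ltnP k j) => h1; case: (ltnP k i) => h2 /=; lia.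
  rewrite sum_range; lia.
Qed.

End Core.

Local Close Scope ring_scope.

Theorem mainTheorem13 (v : nat) :
  (v %% 24 = 1 \/ v %% 24 = 7)%N -> (7 <= v)%N ->
  forall i j : nat, (j <= v.-1 %/ 6)%N -> (j <= i <= v.-1 %/ 6)%N ->
  exists m : {set 'Z_v} -> nat,
    isCTS 4 m /\
    fine_c m 2 = (2 * (v.-1 %/ 6) - 2 * i)%N /\
    fine_c m 3 = (i - j)%N /\
    fine_c m 4 = j.
Proof.
move=> hv h7 i j hj /andP[hji hi].
have [n [Ev [Hn4 Hn]]] : exists n, v = (6 * n).+1 /\ (n %% 4 = 0 \/ n %% 4 = 1)%N /\ (0 < n)%N.
  by exists (v.-1 %/ 6); lia.
subst v.
have En : ((6 * n).+1.-1 %/ 6 = n)%N by lia.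
rewrite En in hi *.
have [T [HT HL]] := skolem Hn Hn4.
exact: (core_exists Hn HT HL hji hi).
Qed.
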